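(* Let $\Gamma$ be a simple graph with $n$ vertices having exactly $m$ universal vertices, where $1\leqslant m<n$. Then the number $\kappa(\Gamma)$ of spanning trees of $\Gamma$ is divisible by $n^{m-1}$.
   Context: A universal vertex of a graph is a vertex adjacent to all other vertices. *)

(* Defs.v *)
(* A simple graph on a finite vertex type T is a symmetric,
   irreflexive boolean relation e : rel T. *)
From mathcomp Require Import all_boot.
From mathcomp Require Import boolp.
Set Implicit Arguments. Unset Strict Implicit. Unset Printing Implicit Defensive.

Section Graphs.
Variable T : finType.

Definition graph_edges (e : rel T) : {set {set T}} :=
  [set A : {set T} | [exists x, exists y, (x != y) && e x y && (A == [set x; y])]].

Definition edge_set_rel (F : {set {set T}}) : rel T :=
  fun x y => (x != y) && ([set x; y] \in F).

Definition set_connected (F : {set {set T}}) : bool :=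
  [forall x, forall y, connect (edge_set_rel F) x y].

Definition set_acyclic (F : {set {set T}}) : Prop :=
  forall s : seq T, uniq s -> 3 <= size s -> ~~ cycle (edge_set_rel F) s.

Definition is_spanning_tree (e : rel T) (F : {set {set T}}) : Prop :=
  F \subset graph_edges e /\ set_connected F /\ set_acyclic F.

Definition num_spanning_trees (e : rel T) : nat :=
  #|[set F : {set {set T}} | `[< is_spanning_tree e F >]]|.

Definition universal (e : rel T) (v : T) : bool :=
  [forall w, (w != v) ==> e v w].

End Graphs.

(* Main.v *)
Require Import Defs.
From mathcomp Require Import all_boot.
From mathcomp Require Import boolp zify.
Set Implicit Arguments. Unset Strict Implicit. Unset Printing Implicit Defensive.

Section Key.
Variable T : finType.

Lemma reach (C : {set T}) (f : T -> T) w k :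
  (forall c, c \in C -> f c = c) -> iter k f w \in C -> iter #|T| f w \in C.
Proof.
move=> fixC hk.
have hc : fconnect f w (iter k f w) := fconnect_iter f k w.
have hi := iter_findex hc; have hm := findex_max hc.
have ho : order f w <= #|T| by apply: max_card.
have -> : #|T| = (#|T| - findex f w (iter k f w)) + findex f w (iter k f w).
  by rewrite subnK // ltnW // (leq_trans hm ho).
by rewrite iterD hi iter_fix // fixC.
Qed.

Lemma first_hit (p q : T -> T) v y k :
  q v = v -> (forall z, z != v -> q z = p z) -> iter k q y = v ->
  exists k0, iter k0 p y = v.
Proof.
move=> qv qp; elim: k y => [|k IH] y; first by move=> /= ->; exists 0.
rewrite iterSr; case: (eqVneq y v) => [->|nyv]; first by exists 0.
rewrite qp // => /IH [k0 hk0]; exists k0.+1; by rewrite iterSr.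
Qed.

Variable e : rel T.

Definition valid (D C : {set T}) (p : {ffun T -> T}) : bool :=
  [forall w, if w \in D then ((p w \in D) && e w (p w)) || (p w \in C) else p w == w].
Definition col (p : {ffun T -> T}) w := iter #|T| p w.
Definition acyc (D C : {set T}) p := [forall w in D, col p w \in C].
Definition PS D C := [set p : {ffun T -> T} | valid D C p && acyc D C p].

Lemma validD D C p w : valid D C p -> w \in D -> ((p w \in D) && e w (p w)) || (p w \in C).
Proof. by move=> /forallP /(_ w); case: (w \in D). Qed.
Lemma validN D C p w : valid D C p -> w \notin D -> p w = w.
Proof. by move=> /forallP /(_ w); case: (w \in D) => // /eqP. Qed.
Lemma acycP D C p w : acyc D C p -> w \in D -> col p w \in C.
Proof. by move=> /forallP /(_ w) /implyP; apply. Qed.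

Lemma PSP D C p : p \in PS D C -> valid D C p /\ acyc D C p.
Proof. by rewrite inE => /andP. Qed.

End Key.

Section Sym.
Variable T : finType.
Variable e : rel T.
Variables D C : {set T}.
Hypothesis dDC : [disjoint D & C].

Lemma notDC x : x \in C -> x \notin D.
Proof. by move=> xC; rewrite (disjointFl dDC xC). Qed.

Definition swap (c c' x : T) := if x == c then c' else if x == c' then c else x.

Lemma swapK c c' : involutive (swap c c').
Proof.
move=> x; rewrite /swap.
case: (eqVneq x c) => [xe|xc]; rewrite ?xe; first by rewrite eqxx; case: (eqVneq c' c) => [->|].
case: (eqVneq x c') => [xe|xc']; rewrite ?xe; first by rewrite eqxx.
by rewrite (negbTE xc) (negbTE xc').
Qed.

Lemma swap_id c c' x : x != c -> x != c' -> swap c c' x = x.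
Proof. by rewrite /swap => /negbTE -> /negbTE ->. Qed.

Lemma swap_eq c c' x : (swap c c' x == c') = (x == c).
Proof.
rewrite /swap; case: (eqVneq x c) => [xe|xc]; rewrite ?xe; first by rewrite eqxx.
case: (eqVneq x c') => [xe|xc']; first by rewrite -xe eq_sym (negbTE xc).
by rewrite (negbTE xc').
Qed.

Variables c c' : T.
Hypotheses (cC : c \in C) (c'C : c' \in C).

Lemma swap_C x : (swap c c' x \in C) = (x \in C).
Proof.
rewrite /swap; case: (eqVneq x c) => [xe|xc]; rewrite ?xe; first by rewrite cC c'C.
case: (eqVneq x c') => [xe|xc']; rewrite ?xe //; by rewrite cC c'C.
Qed.

Lemma swap_D x : (swap c c' x \in D) = (x \in D).
Proof.
rewrite /swap; case: (eqVneq x c) => [xe|xc]; rewrite ?xe; first by rewrite (negbTE (notDC cC)) (negbTE (notDC c'C)).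
case: (eqVneq x c') => [xe|xc']; rewrite ?xe //; by rewrite (negbTE (notDC cC)) (negbTE (notDC c'C)).
Qed.

Lemma swap_Did x : x \in D -> swap c c' x = x.
Proof.
move=> xD; apply: swap_id; apply/eqP => h; subst x.
  by move: (notDC cC); rewrite xD.
by move: (notDC c'C); rewrite xD.
Qed.

Definition tau (p : {ffun T -> T}) : {ffun T -> T} :=
  [ffun w => if w \in D then swap c c' (p w) else p w].

Lemma tauK : involutive tau.
Proof. move=> p; apply/ffunP => w; rewrite !ffunE; case: (w \in D) => //; exact: swapK. Qed.

Lemma tau_iter p k w : valid e D C p ->
  iter k (tau p) (swap c c' w) = swap c c' (iter k p w).
Proof.
move=> vp; elim: k => [//|k IH]; rewrite !iterS IH.
set z := iter k p w.
case zD: (z \in D).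
  by rewrite (swap_Did zD) ffunE zD.
have szD : swap c c' z \notin D by rewrite swap_D zD.
by rewrite ffunE (negbTE szD) (validN vp szD) (validN vp (negbT zD)).
Qed.

Lemma tau_PS p : p \in PS e D C -> tau p \in PS e D C.
Proof.
move=> /PSP [vp ap]; rewrite inE; apply/andP; split.
  apply/forallP => w; rewrite ffunE.
  case wD: (w \in D).
    have := validD vp wD; case/orP => [/andP [pD ep]|pC].
      by rewrite (swap_Did pD) pD ep.
    by rewrite swap_C pC orbT.
  by rewrite (validN vp (negbT wD)).
apply/forallP => w; apply/implyP => wD.
have := tau_iter #|T| w vp; rewrite (swap_Did wD) /col => ->.
by rewrite swap_C; exact: acycP ap wD.
Qed.

Lemma tau_PSE p : (tau p \in PS e D C) = (p \in PS e D C).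
Proof.
apply/idP/idP; last exact: tau_PS.
by move/tau_PS; rewrite tauK.
Qed.

Variable X : {set T}.
Hypothesis XD : X \subset D.

Lemma sym_sum :
  \sum_(p in PS e D C) #|[set w in X | col p w == c']| =
  \sum_(p in PS e D C) #|[set w in X | col p w == c]|.
Proof.
rewrite (reindex_inj (can_inj tauK)) /=.
apply: eq_big => p; first by rewrite tau_PSE.
move=> pP; rewrite tau_PSE in pP; apply: eq_card => w; rewrite !inE.
case wX: (w \in X) => //=.
have wD : w \in D by apply: (subsetP XD).
have [vp _] := PSP pP.
have := tau_iter #|T| w vp; rewrite (swap_Did wD) /col => ->.
by rewrite swap_eq.
Qed.

End Sym.

Lemma sym_main (T : finType) (e : rel T) (D C X : {set T}) c :
  [disjoint D & C] -> X \subset D -> c \in C ->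
  #|C| * \sum_(p in PS e D C) #|[set w in X | col p w == c]| = #|X| * #|PS e D C|.
Proof.
move=> dDC XD cC.
transitivity (\sum_(c' in C) \sum_(p in PS e D C) #|[set w in X | col p w == c]|).
  by rewrite sum_nat_const.
transitivity (\sum_(c' in C) \sum_(p in PS e D C) #|[set w in X | col p w == c']|).
  by apply: eq_bigr => c' c'C; rewrite (sym_sum e dDC cC c'C XD).
rewrite exchange_big /=.
transitivity (\sum_(p in PS e D C) #|X|); last by rewrite sum_nat_const mulnC.
apply: eq_bigr => p pP.
have [_ ap] := PSP pP.
symmetry; rewrite -sum1_card.
rewrite (partition_big (fun w => col p w) (fun j => j \in C)) /=; last first.
  by move=> w wX; apply: (acycP ap); apply: (subsetP XD).
apply: eq_bigr => c' _; rewrite sum1_card; apply: eq_card => w; by rewrite !inE.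
Qed.

Section Rec.
Variable T : finType.
Variable e : rel T.
Hypothesis esym : symmetric e.
Variables (D C : {set T}) (v : T).
Hypothesis dDC : [disjoint D & C].
Hypothesis vD : v \in D.
Hypothesis univ : forall w, w \in D -> w != v -> e v w.

Local Notation D' := (D :\ v).
Local Notation C' := (v |: C).

Lemma vNC : v \notin C.
Proof. by rewrite (disjointFr dDC vD). Qed.

Lemma dDC' : [disjoint D' & C'].
Proof.
rewrite -setI_eq0; apply/eqP/setP => x; rewrite !inE.
case: (eqVneq x v) => //= _; case xD: (x \in D) => //=.
by rewrite (disjointFr dDC xD).
Qed.

Lemma fixC (D0 C0 : {set T}) p c : [disjoint D0 & C0] -> valid e D0 C0 p -> c \in C0 -> p c = c.
Proof. move=> d vp cC; apply: (validN vp); by rewrite (disjointFl d cC). Qed.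

Definition restrict (p : {ffun T -> T}) : {ffun T -> T} := [ffun w => if w == v then v else p w].
Definition upd (q : {ffun T -> T}) t : {ffun T -> T} := [ffun w => if w == v then t else q w].
Definition allowed (q : {ffun T -> T}) := [set t | ((t \in D') || (t \in C)) && (col q t != v)].

Lemma either (p : {ffun T -> T}) k w :
  iter k (restrict p) w = iter k p w \/ iter k (restrict p) w = v.
Proof.
elim: k => [|k [IH|IH]]; first by left.
  rewrite !iterS IH ffunE; case: (eqVneq (iter k p w) v) => _; by [right|left].
by right; rewrite iterS IH ffunE eqxx.
Qed.

Lemma agree (p q : T -> T) z k : (forall y, y != v -> p y = q y) ->
  (forall i, i < k -> iter i q z != v) -> iter k p z = iter k q z.
Proof.
move=> pq; elim: k => [//|k IH] h.
rewrite !iterS IH; last by move=> i ik; apply: h; exact: ltnW.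
by rewrite pq // h.
Qed.

Lemma restrict_PS p : p \in PS e D C -> restrict p \in PS e D' C'.
Proof.
move=> /PSP [vp ap]; rewrite inE; apply/andP; split.
  apply/forallP => w; rewrite ffunE.
  case: (eqVneq w v) => [->|wv]; first by rewrite !inE eqxx.
  rewrite !inE wv /=.
  case wD: (w \in D); last by rewrite (validN vp (negbT wD)).
  have := validD vp wD; case: (eqVneq (p w) v) => //= _; by rewrite orbF.
apply/forallP => w; apply/implyP; rewrite !inE => /andP [wv wD].
case: (either p #|T| w) => h; rewrite /col h ?eqxx //.
by rewrite (acycP ap wD) orbT.
Qed.

Lemma iter_mul (f : T -> T) x n j : iter n f x = x -> iter (j * n) f x = x.
Proof. move=> h; elim: j => [//|j IH]; by rewrite mulSn iterD IH h. Qed.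

Lemma pv_allowed p : p \in PS e D C -> p v \in allowed (restrict p).
Proof.
move=> pP; have [vp ap] := PSP pP.
have colC := acycP ap vD.
have fx := fixC dDC vp.
rewrite inE; apply/andP; split.
  have pvv : p v != v.
    apply/eqP => h; move: colC; rewrite /col iter_fix //; by rewrite (negbTE vNC).
  have := validD vp vD; case/orP => [/andP [pD _]|->]; last by rewrite orbT.
  by rewrite !inE pvv pD.
apply/eqP => h.
have rv : restrict p v = v by rewrite ffunE eqxx.
have rp : forall z, z != v -> restrict p z = p z by move=> z zv; rewrite ffunE (negbTE zv).
have [k0 hk0] := first_hit rv rp h.
have cyc : iter k0.+1 p v = v by rewrite iterSr.
have := iter_mul #|T| cyc; rewrite mulnSr iterD.
rewrite /col in colC.
rewrite iter_fix; last exact: fx.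
move=> e1; move: colC; rewrite e1; by rewrite (negbTE vNC).
Qed.

Lemma upd_PS q t : q \in PS e D' C' -> t \in allowed q -> upd q t \in PS e D C.
Proof.
move=> /PSP [vq aq]; rewrite inE => /andP [tDC tcol].
have qv : q v = v by apply: (validN vq); rewrite !inE eqxx.
have qc : forall c, c \in C -> q c = c.
  move=> c cC; apply: (fixC dDC' vq); by rewrite inE cC orbT.
have pq : forall y, y != v -> upd q t y = q y by move=> y yv; rewrite ffunE (negbTE yv).
have pfix : forall c, c \in C -> upd q t c = c.
  move=> c cC; rewrite pq ?qc //; apply/eqP => h; move: cC; rewrite h; by rewrite (negbTE vNC).
have H1 : forall z, col q z \in C -> iter #|T| (upd q t) z \in C.
  move=> z hz; rewrite (agree pq) //.
  move=> i iT; apply/eqP => hi; move: hz.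
  rewrite /col -(subnK (ltnW iT)) iterD hi iter_fix //; by rewrite (negbTE vNC).
have Hv : iter #|T|.+1 (upd q t) v \in C.
  rewrite iterSr [upd q t v]ffunE eqxx.
  case/orP: tDC => [tD'|tC]; last by rewrite iter_fix // pfix.
  apply: H1.
  have : col q t \in C' by apply: (acycP aq tD').
  rewrite !inE => /orP [/eqP h|//]; by move: tcol; rewrite h eqxx.
rewrite inE; apply/andP; split.
  apply/forallP => w; rewrite ffunE.
  case: (eqVneq w v) => [->|wv].
    rewrite vD; case/orP: tDC => [|->]; last by rewrite orbT.
    rewrite !inE => /andP [tv tD]; by rewrite tD univ.
  case wD: (w \in D); last first.
    by apply/eqP; apply: (validN vq); rewrite !inE wD andbF.
  have wD' : w \in D' by rewrite !inE wv wD.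
  have := validD vq wD'; rewrite !inE.
  case: (eqVneq (q w) v) => [->|qwv] /=.
    by rewrite vD esym univ.
  done.
apply/forallP => w; apply/implyP => wD.
rewrite /col.
case: (eqVneq w v) => [->|wv].
  exact: (reach pfix Hv).
have wD' : w \in D' by rewrite !inE wv wD.
have : col q w \in C' by apply: (acycP aq wD').
rewrite !inE => /orP [/eqP h|hC]; last exact: H1.
have [k0 hk0] := first_hit qv (fun z zv => Logic.eq_sym (pq z zv)) h.
apply: (reach (k := #|T|.+1 + k0) pfix).
by rewrite iterD hk0.
Qed.

Lemma restrict_upd q t : q \in PS e D' C' -> restrict (upd q t) = q.
Proof.
move=> /PSP [vq _]; apply/ffunP => w; rewrite !ffunE.
case: (eqVneq w v) => [->|//].
by rewrite (validN vq) // !inE eqxx.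
Qed.

Lemma fiber : #|PS e D C| = \sum_(q in PS e D' C') #|allowed q|.
Proof.
rewrite -sum1_card (partition_big restrict (fun q => q \in PS e D' C')) /=; last first.
  by move=> p; exact: restrict_PS.
apply: eq_bigr => q qP; rewrite sum1_card.
have updI : injective (upd q) by move=> t1 t2 h; move: (congr1 (fun f : {ffun T -> T} => f v) h); rewrite !ffunE eqxx.
rewrite -(card_imset (allowed q) updI); apply: eq_card => p; rewrite unfold_in /=.
apply/andP/imsetP.
  move=> [pP /eqP rq]; exists (p v); first by rewrite -rq; exact: pv_allowed.
  by apply/ffunP => w; rewrite -rq !ffunE; case: (eqVneq w v) => [->|].
move=> [t tA ->]; split; first exact: upd_PS.
by rewrite restrict_upd.
Qed.

Lemma allowed_card q : q \in PS e D' C' ->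
  #|allowed q| + #|[set w in D' | col q w == v]| = #|D'| + #|C|.
Proof.
move=> /PSP [vq _].
have qc : forall c, c \in C -> col q c = c.
  move=> c cC; rewrite /col iter_fix //; apply: (fixC dDC' vq); by rewrite inE cC orbT.
have -> : allowed q = [set w in D' | col q w != v] :|: C.
  apply/setP => t; rewrite !inE.
  case tC: (t \in C); last by rewrite !orbF.
  rewrite !orbT /= qc //; apply/eqP => h; move: tC; by rewrite h (negbTE vNC).
rewrite cardsU.
have -> : [set w in D' | col q w != v] :&: C = set0.
  apply/setP => t; rewrite !inE.
  case tC: (t \in C); rewrite ?andbF //.
  by rewrite (disjointFl dDC tC) !andbF.
rewrite cards0 subn0 addnAC.
congr (_ + _).
rewrite -(cardsID [set w | col q w == v] D').
by rewrite addnC; congr (_ + _); apply: eq_card => w; rewrite !inE andbC.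
Qed.

End Rec.

Lemma rec_id (T : finType) (e : rel T) (D C : {set T}) v :
  symmetric e -> [disjoint D & C] -> v \in D ->
  (forall w, w \in D -> w != v -> e v w) ->
  (#|C| + 1) * #|PS e D C| = #|C| * (#|C| + #|D|) * #|PS e (D :\ v) (v |: C)|.
Proof.
move=> esym dDC vD univ.
have d' : [disjoint D :\ v & v |: C] by apply: dDC'.
have hs := sym_main e d' (subxx (D :\ v)) (setU11 v C).
have hf : #|PS e D C| = \sum_(q in PS e (D :\ v) (v |: C)) #|allowed D C v q| by apply: fiber.
rewrite cardsU1 (disjointFr dDC vD) /= in hs.
have hD := cardsD1 v D; rewrite vD /= in hD.
set A := #|PS e D C| in hf *; set A' := #|PS e (D :\ v) (v |: C)| in hs *.
set Sd := \sum_(q in _) #|[set w in D :\ v | col q w == v]| in hs.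
have hsum : A + Sd = (#|D :\ v| + #|C|) * A'.
  rewrite hf /Sd -big_split /=.
  transitivity (\sum_(q in PS e (D :\ v) (v |: C)) (#|D :\ v| + #|C|)); last by rewrite sum_nat_const mulnC.
  apply: eq_bigr => q qP.
  by rewrite (allowed_card dDC vD qP).
rewrite hD.
set N := #|D :\ v| in hs hsum *; set x := #|C| in hs hsum *.
nia.
Qed.

Lemma key (T : finType) (e : rel T) : symmetric e -> forall j (D C S : {set T}),
  #|S| = j -> [disjoint D & C] -> S \subset D ->
  (forall v w, v \in S -> w \in D -> w != v -> e v w) -> ~~ (D \subset S) ->
  #|C| * (#|C| + #|D|) ^ j %| #|PS e D C|.
Proof.
move=> esym; elim=> [|j IH] D C S hS dDC SD univ nDS.
  move/eqP: hS; rewrite cards_eq0 => /eqP S0; subst S.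
  have [v0 v0D] : exists v0, v0 \in D.
    case/subsetPn: nDS => x xD _; by exists x.
  rewrite expn0 muln1.
  case: (set_0Vmem C) => [C0|[c cC]].
    suff -> : #|PS e D C| = 0 by rewrite dvdn0.
    apply/eqP; rewrite cards_eq0; apply/eqP/setP => p; rewrite in_set0.
    apply/negP => /PSP [_ ap]; have := acycP ap v0D; by rewrite C0 inE.
  have hX : [set v0] \subset D by rewrite sub1set.
  have := sym_main e dDC hX cC; rewrite cards1 mul1n => <-.
  exact: dvdn_mulr.
have [v vS] : exists v, v \in S.
  apply/set0Pn; rewrite -card_gt0 hS //.
have vD : v \in D by apply: (subsetP SD).
have hS' : #|S :\ v| = j by move: hS; rewrite (cardsD1 v S) vS add1n => -[].
have dDC' : [disjoint D :\ v & v |: C] by apply: dDC'.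
have SD' : S :\ v \subset D :\ v by apply: setSD.
have univ' : forall a w, a \in S :\ v -> w \in D :\ v -> w != a -> e a w.
  move=> a w; rewrite !inE => /andP [_ aS] /andP [_ wD]; exact: univ.
have nDS' : ~~ (D :\ v \subset S :\ v).
  case/subsetPn: nDS => x xD xS; apply/subsetPn; exists x.
    rewrite !inE xD andbT; apply/eqP => xv; move: xS; by rewrite xv vS.
  by rewrite !inE (negbTE xS) andbF.
have := IH _ _ _ hS' dDC' SD' univ' nDS'.
have hr := rec_id esym dDC vD (fun w wD wv => univ v w vS wD wv).
rewrite cardsU1 (disjointFr dDC vD) /=.
have hD := cardsD1 v D; rewrite vD /= in hD.
move: hr; rewrite hD.
set A := #|PS e D C|; set A' := #|PS e _ _|; set x := #|C|; set N := #|D :\ v|.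
move=> hr /dvdnP [k hk].
apply/dvdnP; exists k.
have e1 : 1 + x + N = x + (1 + N) by rewrite addnA [1 + x]addnC.
rewrite e1 in hk; rewrite expnS.
move: hr hk; set P := (x + (1 + N)) ^ j; set M := x + (1 + N) => hr hk.
rewrite hk in hr.
have hx : 0 < x + 1 by rewrite addn1.
apply/eqP; rewrite -(eqn_pmul2l hx) hr; apply/eqP.
nia.
Qed.

Lemma prev_at_last (T : eqType) (a c : T) r : a \notin r -> prev_at a a c r = last c r.
Proof.
elim: r c => [|y r IH] c /=; first by rewrite eqxx.
rewrite inE negb_or => /andP [ay ar]; rewrite (negbTE ay); exact: IH.
Qed.

Lemma next_neq_prev (T : eqType) (s : seq T) a :
  uniq s -> 3 <= size s -> a \in s -> next s a != prev s a.
Proof.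
move=> us ss as_.
case: (rot_to as_) => i s' hrot.
rewrite -(next_rot i us) -(prev_rot i us) hrot.
have us' : uniq (a :: s') by rewrite -hrot rot_uniq.
have ss' : 2 <= size s' by move: ss; rewrite -(size_rot i) hrot.
case: s' hrot us' ss' => [|b [|c r]] //= _ /andP [anr /andP [bnr _]] _.
move: anr; rewrite !inE !negb_or => /andP [ab /andP [ac ar]].
rewrite eqxx (negbTE ab) (negbTE ac) prev_at_last //.
apply/eqP => h; move: bnr; rewrite h mem_last //.
Qed.

Lemma trick (T : finType) (u : T) (f g : T -> T) (X : pred T) :
  (forall x, X x -> X (g x) /\ f (g x) = x) -> (forall y, iter #|T| f y = u) ->
  forall x, X x -> x = u.
Proof.
move=> hg hf x Xx.
have h : forall k, X (iter k g x) /\ iter k f (iter k g x) = x.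
  elim=> [//|k [IH1 IH2]]; rewrite iterS; have [h1 h2] := hg _ IH1.
  by split => //; rewrite iterSr h2.
by have [_ <-] := h #|T|.
Qed.

Lemma edge_rel_sym (T : finType) (F : {set {set T}}) : symmetric (edge_set_rel F).
Proof. by move=> x y; rewrite /edge_set_rel eq_sym setUC. Qed.

Lemma ge_e (T : finType) (e : rel T) a b : symmetric e ->
  [set a; b] \in graph_edges e -> a != b -> e a b.
Proof.
move=> esym; rewrite inE => /existsP [x /existsP [y /andP [/andP [xy exy] /eqP h]]] ab.
have : a \in [set x; y] by rewrite -h set21.
have : b \in [set x; y] by rewrite -h set22.
rewrite !inE => /orP [/eqP bx|/eqP hby] /orP [/eqP ax|/eqP ay]; subst.
- by move: ab; rewrite eqxx.
- by rewrite esym.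
- by [].
- by move: ab; rewrite eqxx.
Qed.

Section ST.
Variables (T : finType) (e : rel T) (u : T).
Hypotheses (esym : symmetric e) (eirr : irreflexive e) (uU : forall w, w != u -> e u w).

Local Notation D := [set~ u].
Local Notation C := [set u].

Definition Phi (p : {ffun T -> T}) : {set {set T}} := [set [set w; p w] | w in [set~ u]].

Lemma PS_pu p : p \in PS e D C -> p u = u.
Proof. by move=> /PSP [vp _]; apply: (validN vp); rewrite !inE eqxx. Qed.

Lemma PS_e p w : p \in PS e D C -> w != u -> e w (p w).
Proof.
move=> /PSP [vp _] wu.
have := validD vp (w:=w); rewrite !inE wu => /(_ isT) /orP [/andP [_ ->] //| /eqP ->].
by rewrite esym uU.
Qed.

Lemma PS_iter p w : p \in PS e D C -> iter #|T| p w = u.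
Proof.
move=> pP; have [_ ap] := PSP pP.
case: (eqVneq w u) => [->|wu]; first by rewrite iter_fix // PS_pu.
by have := acycP ap (w:=w); rewrite !inE wu => /(_ isT) /eqP.
Qed.

Lemma R_Phi p a b : edge_set_rel (Phi p) a b ->
  (a != u /\ b = p a) \/ (b != u /\ a = p b).
Proof.
rewrite /edge_set_rel => /andP [ab /imsetP [w]]; rewrite !inE => wu h.
have : a \in [set w; p w] by rewrite -h set21.
have : b \in [set w; p w] by rewrite -h set22.
rewrite !inE => /orP [/eqP bw|/eqP bp] /orP [/eqP aw|/eqP ap]; subst.
- by move: ab; rewrite eqxx.
- by right.
- by left.
- by move: ab; rewrite eqxx.
Qed.

Lemma Phi_R p w : p \in PS e D C -> w != u -> edge_set_rel (Phi p) w (p w).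
Proof.
move=> pP wu; rewrite /edge_set_rel.
have ew := PS_e pP wu.
apply/andP; split; first by apply/eqP => h; move: ew; rewrite -h eirr.
by apply/imsetP; exists w; rewrite ?inE.
Qed.

Lemma Phi_acyclic p : p \in PS e D C -> set_acyclic (Phi p).
Proof.
move=> pP s us ss; apply/negP => cs.
pose g a := if p (next s a) == a then next s a else prev s a.
have hg : forall a, a \in s -> g a \in s /\ p (g a) = a.
  move=> a as_; rewrite /g; case: (eqVneq (p (next s a)) a) => [->|hn].
    by rewrite mem_next.
  split; first by rewrite mem_prev.
  have := R_Phi (next_cycle cs as_); case=> [[_ hna]|[_ h]]; last by move: hn; rewrite -h eqxx.
  have := R_Phi (prev_cycle cs as_); case=> [[_ h1]|[_ hpa]]; first by rewrite -h1.
  by move: (next_neq_prev us ss as_); rewrite hna hpa eqxx.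
have h := trick (X := fun a => a \in s) hg (fun y => PS_iter y pP).
clear hg; move: h; rewrite {}/g; case: s us ss cs => [|a [|b r]] // us _ _ h.
move: us; rewrite cons_uniq inE negb_or => /andP [/andP [ab _] _].
have ha : a = u by apply: h; rewrite inE eqxx.
have hb : b = u by apply: h; rewrite !inE eqxx orbT.
by move: ab; rewrite ha hb eqxx.
Qed.

Lemma Phi_connected p : p \in PS e D C -> set_connected (Phi p).
Proof.
move=> pP.
have hc : forall x, connect (edge_set_rel (Phi p)) x u.
  move=> x; rewrite -(PS_iter x pP).
  elim: #|T| => [|k IH]; first exact: connect0.
  apply: (connect_trans IH); rewrite iterS.
  case: (eqVneq (iter k p x) u) => [->|hu]; first by rewrite PS_pu.
  exact/connect1/Phi_R.
apply/forallP => x; apply/forallP => y.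
apply: (connect_trans (hc x)).
by rewrite (sym_connect_sym (@edge_rel_sym _ _)).
Qed.

Lemma Phi_sub p : p \in PS e D C -> Phi p \subset graph_edges e.
Proof.
move=> pP; apply/subsetP => A /imsetP [w]; rewrite !inE => wu ->.
have ew := PS_e pP wu.
apply/existsP; exists w; apply/existsP; exists (p w).
rewrite ew eqxx andbT andbT; apply/eqP => h; move: ew; by rewrite -h eirr.
Qed.

Lemma Phi_inj : {in PS e D C &, injective Phi}.
Proof.
move=> p p' pP p'P hPhi.
have key : forall x, x != u -> p x != p' x -> False.
  move=> x0 x0u hx0.
  have hg : forall x, (x != u) && (p x != p' x) ->
      ((p' x != u) && (p (p' x) != p' (p' x))) /\ p (p' x) = x.
    move=> x /andP [xu hx].
    have hR : edge_set_rel (Phi p) x (p' x) by rewrite hPhi; exact: Phi_R.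
    case: (R_Phi hR) => [[_ h]|[p'xu h]]; first by move: hx; rewrite h eqxx.
    split => //; rewrite p'xu /= -h.
    apply/negP => /eqP h2.
    have xeu : x = u.
      apply: (@trick _ u p' p' (fun y => (y == x) || (y == p' x)) _ (fun y => PS_iter y p'P)); last by rewrite eqxx.
      move=> y /orP [/eqP ->|/eqP ->]; first by rewrite -h2 eqxx orbT.
      by rewrite -h2 eqxx.
    by move: xu; rewrite xeu eqxx.
  have := trick hg (fun y => PS_iter y pP) (x := x0); rewrite x0u hx0 => /(_ isT) h.
  by move: x0u; rewrite h eqxx.
apply/ffunP => x; case: (eqVneq x u) => [->|xu]; first by rewrite !PS_pu.
by apply/eqP; apply/negPn/negP => /(key _ xu).
Qed.

End ST.

Lemma minimal_tree (T : finType) (e : rel T) (F F' : {set {set T}}) :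
  F \subset graph_edges e -> set_acyclic F -> F' \subset F -> set_connected F' -> F = F'.
Proof.
move=> Fsub Facyc F'F F'con.
apply/eqP; rewrite eqEsubset F'F andbT; apply/subsetP => A AF.
have := subsetP Fsub A AF; rewrite inE => /existsP [a /existsP [b /andP [/andP [ab _] /eqP hA]]].
subst A; apply/negPn/negP => AF'.
have := forallP (forallP F'con a) b => /connectP [s ps hb].
move: hb; case: (shortenP ps) => s' ps' us' _ hl.
have sub : subrel (edge_set_rel F') (edge_set_rel F).
  move=> x y /andP [xy xyF]; apply/andP; split => //; exact: (subsetP F'F).
apply: (negP (Facyc (a :: s') us' _)).
  case: s' ps' us' hl => [|y [|z r]] /=.
  - by move=> _ _ h; move: ab; rewrite h eqxx.
  - move=> /andP [/andP [_ h] _] _ hy; subst y; by move: AF'; rewrite h.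
  - by [].
rewrite /= rcons_path (sub_path sub ps') -hl /=.
by rewrite /edge_set_rel eq_sym ab setUC.
Qed.

Section Surj.
Variables (T : finType) (e : rel T) (u : T).
Hypotheses (esym : symmetric e) (eirr : irreflexive e) (uU : forall w, w != u -> e u w).
Variable F : {set {set T}}.
Hypotheses (Fsub : F \subset graph_edges e) (Fcon : set_connected F) (Facyc : set_acyclic F).

Local Notation R := (edge_set_rel F).

Lemma ex_d v : exists k, [exists s : k.-tuple T, path R v s && (last v s == u)].
Proof.
have := forallP (forallP Fcon v) u => /connectP [s ps hu].
exists (size s); apply/existsP; exists (in_tuple s); by rewrite /= ps hu eqxx.
Qed.

Definition dist v := ex_minn (ex_d v).

Lemma dist_dec v : v != u -> exists y, R v y && (dist y < dist v).
Proof.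
move=> vu; rewrite /dist; case: ex_minnP => k /existsP [s /andP [ps /eqP hl]] hmin.
case: s ps hl => [[|y s'] hs] //=.
  by move=> _ h; move: vu; rewrite h eqxx.
move=> /andP [Rvy ps'] hl; exists y; rewrite Rvy /=.
case: ex_minnP => k' _ hmin'.
have : k' <= size s'.
  apply: hmin'; apply/existsP; exists (in_tuple s'); by rewrite /= ps' hl eqxx.
by move: hs => /= /eqP <-.
Qed.

Definition par v := if v == u then u else odflt v [pick y | R v y && (dist y < dist v)].
Definition ptree : {ffun T -> T} := [ffun v => par v].

Lemma ptree_R v : v != u -> R v (ptree v) && (dist (ptree v) < dist v).
Proof.
move=> vu; rewrite ffunE /par (negbTE vu).
case: pickP => [y //|h].
have [y hy] := dist_dec vu; by move: (h y); rewrite hy.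
Qed.

Lemma ptree_u : ptree u = u.
Proof. by rewrite ffunE /par eqxx. Qed.

Lemma ptree_reach : forall n w, dist w < n -> exists k, iter k ptree w = u.
Proof.
elim=> [//|n IH] w hw.
case: (eqVneq w u) => [->|wu]; first by exists 0.
have /andP [_ hd] := ptree_R wu.
have [k hk] := IH (ptree w) (leq_trans hd hw).
by exists k.+1; rewrite iterSr.
Qed.

Lemma ptree_PS : ptree \in PS e [set~ u] [set u].
Proof.
rewrite inE; apply/andP; split.
  apply/forallP => w; rewrite !inE.
  case: (eqVneq w u) => [->|wu] /=; first by rewrite ptree_u.
  have /andP [/andP [wp wpF] _] := ptree_R wu.
  have ew : e w (ptree w) by apply: (ge_e esym) => //; exact: (subsetP Fsub).
  by rewrite ew andbT; case: (ptree w == u).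
apply/forallP => w; apply/implyP => _.
have [k hk] := ptree_reach (ltnSn (dist w)).
apply: (reach (k := k)); last by rewrite hk inE.
by move=> c; rewrite inE => /eqP ->; exact: ptree_u.
Qed.

Lemma ptree_Phi : Phi u ptree = F.
Proof.
symmetry; apply: (minimal_tree Fsub Facyc).
  apply/subsetP => A /imsetP [w]; rewrite !inE => wu ->.
  by have /andP [/andP [_ ->] _] := ptree_R wu.
exact: (Phi_connected esym eirr uU ptree_PS).
Qed.

End Surj.

Unset Implicit Arguments.

Theorem lemma3p2 (T : finType) (e : rel T) (m : nat) :
  symmetric e -> irreflexive e ->
  #|[set v | universal e v]| = m ->
  1 <= m < #|T| ->
  #|T| ^ (m - 1) %| num_spanning_trees e.
Proof.
move=> esym eirr hU /andP [m1 mn].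
set U := [set v | universal e v] in hU.
have univP : forall v w, v \in U -> w != v -> e v w.
  by move=> v w; rewrite inE => /forallP /(_ w) /implyP.
have [u uU] : exists u, u \in U by apply/set0Pn; rewrite -card_gt0 hU.
have uUv : forall w, w != u -> e u w by move=> w; apply: univP.
have hS : #|U :\ u| = m - 1 by move: hU; rewrite (cardsD1 u U) uU add1n => <-; rewrite subn1.
have dDC : [disjoint [set~ u] & [set u]].
  rewrite -setI_eq0; apply/eqP/setP => x; rewrite !inE; by case: (x == u).
have SD : U :\ u \subset [set~ u] by apply/subsetP => x; rewrite !inE => /andP [].
have univ : forall v w, v \in U :\ u -> w \in [set~ u] -> w != v -> e v w.
  by move=> v w /setD1P [_ vU] _; apply: univP vU.
have nDS : ~~ ([set~ u] \subset U :\ u).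
  have [w wU] : exists w, w \notin U.
    apply/existsP; rewrite -negb_forall; apply/negP => /forallP hall.
    have hUT : U = setT by apply/setP => x; rewrite in_setT; exact: hall.
    by move: mn; rewrite -hU hUT cardsT ltnn.
  apply/subsetPn; exists w; last by rewrite in_setD1 (negbTE wU) andbF.
  rewrite !inE; apply/eqP => h; move: wU; by rewrite h uU.
have := key esym hS dDC SD univ nDS.
rewrite cards1 mul1n cardsC1 add1n prednK; last by apply: (leq_ltn_trans _ mn).
suff -> : num_spanning_trees e = #|PS e [set~ u] [set u]| by [].
rewrite /num_spanning_trees -(card_in_imset (Phi_inj esym eirr uUv)).
apply: eq_card => F; rewrite inE.
apply/asboolP/imsetP.
  move=> [Fsub [Fcon Facyc]].
  exists (ptree u Fcon); first exact: (ptree_PS u esym Fsub).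
  by rewrite (ptree_Phi esym eirr uUv Fsub Fcon Facyc).
move=> [p pP ->]; split; first exact: Phi_sub.
split; first exact: Phi_connected.
exact: (Phi_acyclic pP).
Qed.
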